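(* Let $\Delta$ be a simplicial complex of subsets of $\{1,\dots,n\}$. Then $K_\Delta=\ker\tau_\Delta$ is generated by the following linear forms: for every pair $\mathscr J,\mathcal K\in\Delta$ and every choice of values $c_j\in\{1,\dots,a_j\}$ for $j\in\mathscr J\cap\mathcal K$, the form $$\sum_{\sigma}X_\sigma-\sum_{\rho}X_\rho,$$ where $\sigma$ ranges over tuples with $\sigma_j=c_j$ for $j\in\mathscr J\cap\mathcal K$, $\sigma_j\in\{1,\dots,a_j\}$ arbitrary for $j\in\mathscr J\setminus\mathcal K$, and $\sigma_j=\bullet$ for $j\notin\mathscr J$; and $\rho$ ranges over tuples with $\rho_j=c_j$ for $j\in\mathscr J\cap\mathcal K$, $\rho_j\in\{1,\dots,a_j\}$ arbitrary for $j\in\mathcal K\setminus\mathscr J$, and $\rho_j=\bullet$ for $j\notin\mathcal K$.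
   Context: $\mathbb K$ is a field, $a_1,\dots,a_n$ positive integers, $R=\mathbb K[x_{i_1,\dots,i_n}:1\le i_j\le a_j]$. For a tuple $\sigma$ with $\sigma_j\in\{1,\dots,a_j\}\cup\{+\}$, $x_\sigma$ is the sum of all $x_{i_1,\dots,i_n}$ with $i_j=\sigma_j$ whenever $\sigma_j\ne+$. A simplicial complex $\Delta$ is a nonempty collection of subsets of $\{1,\dots,n\}$ closed under subsets. $S_\Delta$ is the polynomial ring over $\mathbb K$ in variables $X_\sigma$, one for each tuple $\sigma$ with $\sigma_j\in\{1,\dots,a_j\}\cup\{\bullet\}$ and $\{j:\sigma_j\ne\bullet\}\in\Delta$. $\tau_\Delta:S_\Delta\to R$ sends $X_\sigma$ to $x_{\sigma''}$, where $\sigma''$ is $\sigma$ with each $\bullet$ replaced by $+$, and $K_\Delta=\ker\tau_\Delta$. *)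

(* Defs.v *)
From HB Require Import structures.
From mathcomp Require Import all_boot all_order all_algebra.
From mathcomp Require Import mpoly.
Set Implicit Arguments. Unset Strict Implicit. Unset Printing Implicit Defensive.
Import GRing.Theory.
Local Open Scope ring_scope.

(* Indices j in {1..n} are 'I_n; values {1..a_j} are 'I_(a j) (0-based).
   The symbol "bullet" is None, a value v is Some v. *)

Definition simplicial_complex (n : nat) (D : {set {set 'I_n}}) : Prop :=
  D != set0 /\ forall A B : {set 'I_n}, B \subset A -> A \in D -> B \in D.

Definition Ridx (n : nat) (a : 'I_n -> nat) : finType := {dffun forall j : 'I_n, 'I_(a j)}.
Definition Stup (n : nat) (a : 'I_n -> nat) : finType := {dffun forall j : 'I_n, option 'I_(a j)}.

Definition supp n (a : 'I_n -> nat) (s : Stup a) : {set 'I_n} :=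
  [set j | s j != None].

Definition Sidx n (a : 'I_n -> nat) (D : {set {set 'I_n}}) : finType :=
  {s : Stup a | supp s \in D}.

Definition Rring (K : fieldType) n (a : 'I_n -> nat) := {mpoly K[#|Ridx a|]}.
Definition xvar (K : fieldType) n (a : 'I_n -> nat) (t : Ridx a) : Rring K a :=
  'X_(enum_rank t).

Definition xplus (K : fieldType) n (a : 'I_n -> nat) (s : Stup a) : Rring K a :=
  \sum_(t : Ridx a | [forall j, if s j is Some v then t j == v else true])
     xvar K t.

Definition Sring (K : fieldType) n (a : 'I_n -> nat) (D : {set {set 'I_n}}) :=
  {mpoly K[#|Sidx a D|]}.
Definition Xvar (K : fieldType) n (a : 'I_n -> nat) (D : {set {set 'I_n}})
  (s : Sidx a D) : Sring K a D := 'X_(enum_rank s).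

Definition tau (K : fieldType) n (a : 'I_n -> nat) (D : {set {set 'I_n}})
  (p : Sring K a D) : Rring K a :=
  p \mPo [tuple xplus K (val (enum_val i) : Stup a) | i < #|Sidx a D|].

Definition K_Delta (K : fieldType) n (a : 'I_n -> nat) (D : {set {set 'I_n}})
  (p : Sring K a D) : Prop := tau p = 0.

Definition pattern n (a : 'I_n -> nat) (J L : {set 'I_n})
  (c : {dffun forall j : 'I_n, 'I_(a j)}) (s : Stup a) : bool :=
  [forall j, if j \in J then (if j \in L then s j == Some (c j) else s j != None)
             else s j == None].

(* the linear form  sum_sigma X_sigma - sum_rho X_rho  for J, L in Delta and
   values c_j (only those with j in J :&: L are used) *)
Definition genform (K : fieldType) n (a : 'I_n -> nat) (D : {set {set 'I_n}})
  (J L : {set 'I_n}) (c : {dffun forall j : 'I_n, 'I_(a j)}) : Sring K a D :=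
  \sum_(s : Sidx a D | pattern J L c (val s)) Xvar K s
  - \sum_(r : Sidx a D | pattern L J c (val r)) Xvar K r.

Definition is_generator (K : fieldType) n (a : 'I_n -> nat) (D : {set {set 'I_n}})
  (g : Sring K a D) : Prop :=
  exists (J L : {set 'I_n}) (c : {dffun forall j : 'I_n, 'I_(a j)}),
    [/\ J \in D, L \in D & g = genform K D J L c].

Definition in_ideal_gen (R : comRingType) (G : R -> Prop) (p : R) : Prop :=
  exists s : seq (R * R), (forall x, x \in s -> G x.2) /\
    p = \sum_(x <- s) x.1 * x.2.

(* Main.v *)
Require Import Defs.
From mathcomp Require Import all_boot all_order all_algebra.
From mathcomp Require Import mpoly.
From mathcomp Require Import ring.
Set Implicit Arguments. Unset Strict Implicit. Unset Printing Implicit Defensive.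
Import GRing.Theory.
Local Open Scope ring_scope.

Lemma sum_prod_dep (R : comNzRingType) n (b : 'I_n -> nat) (Hb : forall j, (0 < b j)%N)
  (G : forall j, 'I_(b j) -> R) :
  \sum_(t : {dffun forall j, 'I_(b j)}) \prod_j G j (t j)
  = \prod_j \sum_(x : 'I_(b j)) G j x.
Proof.
pose M := (\max_j b j)%N.
have leM : forall j, (b j <= M)%N by move=> j; exact: (leq_bigmax (F := b) j).
pose d j : 'I_(b j) := Ordinal (Hb j).
pose G' j (k : nat) := G j (insubd (d j) k).
transitivity (\prod_j \sum_(y < M | (y < b j)%N) G' j y); last first.
  apply: eq_bigr => j _; rewrite -(big_ord_widen M (G' j) (leM j)).
  by apply: eq_bigr => x _; rewrite /G' valKd.
rewrite bigA_distr_big_dep.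
pose fwd (t : {dffun forall j, 'I_(b j)}) : {ffun 'I_n -> 'I_M} :=
  [ffun j => widen_ord (leM j) (t j)].
pose back (f : {ffun 'I_n -> 'I_M}) : {dffun forall j, 'I_(b j)} :=
  [ffun j => insubd (d j) (val (f j))].
rewrite (reindex_onto back fwd); last first.
  move=> t _; apply/ffunP => j; rewrite !ffunE /=; exact: valKd.
apply: eq_big => f.
  apply/eqP/familyP => [H j | H].
    rewrite -H !ffunE -topredE /= val_insubd; case: ifP => //= _; exact: (Hb j).
  rewrite /fwd /back; apply/ffunP => j; apply/val_inj; rewrite !ffunE /= val_insubd.
  by have := H j; rewrite -topredE /= => ->.
move=> _; apply: eq_bigr => j _; rewrite /G' ffunE; by [].
Qed.


Section Ideal.
Variables (R : comNzRingType) (G : R -> Prop).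
Local Notation I := (in_ideal_gen G).
Lemma I0 : I 0. Proof. by exists [::]; split => //; rewrite big_nil. Qed.
Lemma ID p q : I p -> I q -> I (p + q).
Proof.
move=> [s [Hs ->]] [t [Ht ->]]; exists (s ++ t); split; last by rewrite big_cat.
by move=> x; rewrite mem_cat => /orP[/Hs|/Ht].
Qed.
Lemma IM r p : I p -> I (r * p).
Proof.
move=> [s [Hs ->]]; exists [seq (r * x.1, x.2) | x <- s]; split.
  by move=> x /mapP[y /Hs ? ->].
by rewrite big_map mulr_sumr; apply: eq_bigr => x _; rewrite mulrA.
Qed.
Lemma IN p : I p -> I (- p).
Proof. by move=> H; rewrite -mulN1r; apply: IM. Qed.
Lemma IB p q : I p -> I q -> I (p - q).
Proof. by move=> ? ?; apply: ID => //; apply: IN. Qed.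
Lemma Igen g : G g -> I g.
Proof. move=> H; exists [:: (1, g)]; split; first by move=> x; rewrite inE => /eqP ->.
by rewrite big_seq1 mul1r. Qed.
Lemma Isum (T : finType) (P : pred T) F : (forall i, P i -> I (F i)) -> I (\sum_(i | P i) F i).
Proof. move=> H; apply: (big_ind I I0 ID) => //. Qed.
End Ideal.


Section Main.
Variables (K : fieldType) (n : nat) (a : 'I_n -> nat).
Variable (D : {set {set 'I_n}}).

Definition ge (t : Ridx a) (s : Stup a) : bool :=
  [forall j, if s j is Some v then t j == v else true].

Lemma tauX (s : Sidx a D) : tau (Xvar K s) = xplus K (val s).
Proof. by rewrite /tau /Xvar comp_mpolyXU -tnth_nth tnth_mktuple enum_rankK. Qed.

Definition agree (J L : {set 'I_n}) (c : {dffun forall j : 'I_n, 'I_(a j)}) (t : Ridx a) :=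
  [forall j, ((j \in J) && (j \in L)) ==> (t j == c j)].

Definition s0 (J : {set 'I_n}) (t : Ridx a) : Stup a :=
  [ffun j => if j \in J then Some (t j) else None].

Lemma supp_s0 J t : supp (s0 J t) = J.
Proof. by apply/setP => j; rewrite inE ffunE; case: (j \in J). Qed.

Lemma pat_ge J L c t (s : Stup a) :
  pattern J L c s && ge t s = (s == s0 J t) && agree J L c t.
Proof.
apply/andP/andP => [[/forallP H1 /forallP H2] | [/eqP -> /forallP A]].
  split.
    apply/eqP/ffunP => j; rewrite ffunE; move: (H1 j) (H2 j).
    case: (j \in J); case: (j \in L); case: (s j) => // v.
    - by move=> _ /eqP ->.
    - by move=> _ /eqP ->.
  apply/forallP => j; apply/implyP => /andP[jJ jL]; move: (H1 j) (H2 j).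
  by rewrite jJ jL => /eqP ->.
split; apply/forallP => j; rewrite ffunE.
  move: (A j); case: (j \in J); case: (j \in L) => //= /eqP -> //.
by case: (j \in J).
Qed.

Lemma sum_pat J L c : J \in D ->
  \sum_(s : Sidx a D | pattern J L c (val s)) xplus K (val s)
  = \sum_(t : Ridx a | agree J L c t) xvar K t.
Proof.
move=> JD.
rewrite /xplus (exchange_big_dep xpredT) //= [RHS]big_mkcond /=.
apply: eq_bigr => t _.
have sD : supp (s0 J t) \in D by rewrite supp_s0.
pose u : Sidx a D := exist _ (s0 J t) sD.
under eq_bigl => s do rewrite (pat_ge J L c t (val s)).
case: (agree J L c t); last by rewrite big1 // => s; rewrite andbF.
rewrite (eq_bigl (fun s => s == u)) ?big_pred1_eq // => s.
by rewrite andbT.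
Qed.

Lemma agreeC J L c t : agree J L c t = agree L J c t.
Proof. by apply: eq_forallb => j; rewrite andbC. Qed.

Lemma tauB (p q : Sring K a D) : tau (p - q) = tau p - tau q.
Proof. by rewrite /tau raddfB. Qed.
Lemma tau_sum (I : finType) (P : pred I) (F : I -> Sring K a D) :
  tau (\sum_(i | P i) F i) = \sum_(i | P i) tau (F i).
Proof. by rewrite /tau raddf_sum. Qed.
Lemma tauM (p q : Sring K a D) : tau (p * q) = tau p * tau q.
Proof. by rewrite /tau rmorphM. Qed.

Lemma tau_genform J L c : J \in D -> L \in D -> tau (@genform K n a D J L c) = 0.
Proof.
move=> JD LD; rewrite /genform tauB !tau_sum.
under eq_bigr => s _ do rewrite tauX.
under [X in _ - X]eq_bigr => s _ do rewrite tauX.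
by rewrite !sum_pat // (eq_bigl _ _ (agreeC L J c)) subrr.
Qed.

Lemma tau_sumseq (I : Type) (r : seq I) (F : I -> Sring K a D) :
  tau (\sum_(i <- r) F i) = \sum_(i <- r) tau (F i).
Proof. by rewrite /tau raddf_sum. Qed.

Lemma easy_dir (p : Sring K a D) : in_ideal_gen (@is_generator K n a D) p -> tau p = 0.
Proof.
move=> [s [Hs ->]].
have t0 : forall x, x \in s -> tau x.2 = 0.
  move=> x /Hs [J [L [c [JD LD ->]]]]; exact: tau_genform.
rewrite tau_sumseq big1_seq // => x /andP[_ Hx].
by rewrite tauM t0 // mulr0.
Qed.
Variable Hpos : forall j, (0 < a j)%N.

Definition def j : 'I_(a j) := Ordinal (Hpos j).
Definition Z (s : Stup a) : {set 'I_n} :=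
  [set j | if s j is Some v then v == def j else false].
Definition dj j (o : option 'I_(a j)) (x : 'I_(a j)) : K :=
  if o is Some v then (x == v)%:R - (x == def j)%:R else (x == def j)%:R.
Definition dcoef (u : Stup a) (t : Ridx a) : K := \prod_j dj (u j) (t j).
Definition thx (t : Ridx a) : Sring K a D :=
  \sum_(u : Sidx a D | Z (val u) == set0) dcoef (val u) t *: Xvar K u.
Definition theta (p : Rring K a) : Sring K a D :=
  p \mPo [tuple thx (enum_val i) | i < #|Ridx a|].

Lemma theta_x t : theta (xvar K t) = thx t.
Proof. by rewrite /theta /xvar comp_mpolyXU -tnth_nth tnth_mktuple enum_rankK. Qed.

Lemma freeP (s : Stup a) : Z s == set0 -> forall j v, s j = Some v -> v != def j.
Proof.
move=> /eqP H j v E; apply/negP => /eqP Ev.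
have : j \in Z s by rewrite inE E Ev.
by rewrite H inE.
Qed.

Lemma sum_ind m (v : 'I_m) : \sum_(x : 'I_m) ((x == v)%:R : K) = 1.
Proof. by rewrite (bigD1 v) //= eqxx big1 ?addr0 // => x /negbTE ->. Qed.

Lemma sum_indF m (v : 'I_m) (F : 'I_m -> K) : \sum_(x : 'I_m) (x == v)%:R * F x = F v.
Proof. by rewrite (bigD1 v) //= eqxx mul1r big1 ?addr0 // => x /negbTE ->; rewrite mul0r. Qed.

Lemma per_j j (o1 o2 : option 'I_(a j)) :
  (forall v, o1 = Some v -> v != def j) -> (forall v, o2 = Some v -> v != def j) ->
  \sum_(x : 'I_(a j)) ((nat_of_bool (if o1 is Some v then x == v else true))%:R * dj o2 x)
  = (o1 == o2)%:R.
Proof.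
case: o1 => [v|] H1 H2.
  rewrite sum_indF /dj; case: o2 H2 => [w|] H2.
    by rewrite (negbTE (H1 v erefl)) subr0.
  by rewrite (negbTE (H1 v erefl)).
under eq_bigr => x _ do rewrite mul1r.
rewrite /dj; case: o2 H2 => [w|] H2; last by rewrite sum_ind.
by rewrite sumrB !sum_ind subrr.
Qed.

Lemma prod_bool (T : finType) (P : pred T) : \prod_(j : T) ((P j)%:R : K) = [forall j, P j]%:R.
Proof.
case: (boolP [forall j, P j]) => [/forallP H | /forallPn [j Hj]].
  by rewrite big1 // => j _; rewrite H.
by rewrite (bigD1 j) //= (negbTE Hj) mul0r.
Qed.

Definition gej (s : Stup a) j (x : 'I_(a j)) : bool := if s j is Some v then x == v else true.

Lemma coef_id (s u : Stup a) : Z s == set0 -> Z u == set0 ->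
  \sum_(t | ge t s) dcoef u t = (s == u)%:R.
Proof.
move=> Fs Fu; rewrite big_mkcond /=.
transitivity (\sum_(t : Ridx a) \prod_j
   ((gej s (t j))%:R * dj (u j) (t j))).
  apply: eq_bigr => t _; rewrite big_split.
  rewrite (prod_bool (fun j => gej s (t j))) /dcoef /ge.
  by rewrite /gej; case: ifP => _ /=; rewrite ?mul1r ?mul0r.
rewrite (sum_prod_dep Hpos (fun j x => (gej s x)%:R * dj (u j) x)).
transitivity (\prod_j ((s j == u j)%:R : K)).
  apply: eq_bigr => j _; apply: per_j.
    by move=> v E; apply: (freeP Fs E).
  by move=> v E; apply: (freeP Fu E).
rewrite prod_bool.
have -> : [forall j, s j == u j] = (s == u) :> bool.
  by apply/forallP/eqP => [H|-> //]; apply/ffunP => j; apply/eqP.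
by [].
Qed.

Lemma theta_sum (I : finType) (P : pred I) (F : I -> Rring K a) :
  theta (\sum_(i | P i) F i) = \sum_(i | P i) theta (F i).
Proof. by rewrite /theta raddf_sum. Qed.

Lemma base (s : Sidx a D) : Z (val s) == set0 -> theta (xplus K (val s)) = Xvar K s.
Proof.
move=> Fs; rewrite /xplus theta_sum.
under eq_bigr => t _ do rewrite theta_x.
rewrite /thx exchange_big /=.
under eq_bigr => u Fu do rewrite -scaler_suml (coef_id Fs Fu).
rewrite (bigD1 s) //= eqxx scale1r big1 ?addr0 // => u /andP[_ ne].
by rewrite eq_sym val_eqE (negbTE ne) scale0r.
Qed.

Variable HD : simplicial_complex D.

Definition E (p : Sring K a D) : Sring K a D := theta (tau p).
Lemma E_D p q : E (p + q) = E p + E q. Proof. by rewrite /E /tau /theta !raddfD. Qed.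
Lemma E_B p q : E (p - q) = E p - E q. Proof. by rewrite /E /tau /theta !raddfB. Qed.
Lemma E_sum (I : finType) (P : pred I) (F : I -> Sring K a D) :
  E (\sum_(i | P i) F i) = \sum_(i | P i) E (F i).
Proof. rewrite /E tau_sum; exact: theta_sum. Qed.
Lemma E0 : E 0 = 0. Proof. by rewrite /E /tau /theta !raddf0. Qed.

Lemma Zlt (s t : Stup a) j : (forall i, i != j -> s i = t i) -> j \in Z t -> j \notin Z s ->
  (#|Z s| < #|Z t|)%N.
Proof.
move=> H jZ jnZ; apply: proper_card; apply/properP; split; last by exists j.
apply/subsetP => i iZ; case: (eqVneq i j) => [e | ne].
  by subst; rewrite iZ in jnZ.
by move: iZ; rewrite !inE H.
Qed.

Local Notation I := (in_ideal_gen (@is_generator K n a D)).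

Lemma red (σ : Sidx a D) : I (Xvar K σ - E (Xvar K σ)).
Proof.
have [m Hm] : exists m, (#|Z (val σ)| <= m)%N by exists #|Z (val σ)|.
elim: m σ Hm => [|m IH] σ Hm.
  have Z0 : Z (val σ) == set0 by rewrite -cards_eq0 -leqn0.
  by rewrite /E tauX base // subrr; apply: I0.
case: (eqVneq (Z (val σ)) set0) => [Z0 | /set0Pn [j jZ]].
  by rewrite /E tauX base ?Z0 // subrr; apply: I0.
have [v0 [Ev0 v0d]] : exists v0, val σ j = Some v0 /\ v0 = def j.
  move: jZ; rewrite inE; case: (val σ j) => [v0|] // /eqP ->; by exists (def j).
set J := supp (val σ).
have JD : J \in D by exact: (valP σ).
set L := J :\ j.
have LD : L \in D by apply: HD.2 JD; apply: subsetDl.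
pose c : {dffun forall i, 'I_(a i)} := finfun (fun i => odflt (def i) (val σ i)).
pose sb : Stup a := [ffun i => if i == j then None else val σ i].
have sbD : supp sb \in D.
  suff -> : supp sb = L by [].
  apply/setP => i; rewrite /L /J /supp !inE ffunE; by case: (i == j).
pose ub : Sidx a D := exist _ sb sbD.
have F1 : pattern J L c (val σ).
  apply/forallP => i; rewrite /L /J /supp !inE ffunE.
  case: (eqVneq i j) => [-> | ne]; first by rewrite Ev0.
  by case: (val σ i) => [w|] //=.
have F2 : forall r : Sidx a D, pattern L J c (val r) = (r == ub).
  move=> r; rewrite -val_eqE /=.
  apply/forallP/eqP => [H | ->].
    apply/ffunP => i; rewrite ffunE; move: (H i); rewrite /L /J /supp !inE ffunE.
    case: (eqVneq i j) => [-> | ne] /=; first by move/eqP.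
    by case: (val σ i) => [w|] /= /eqP.
  move=> i; rewrite /L /J /supp !inE !ffunE.
  case: (eqVneq i j) => [-> | ne] //=.
  by case: (val σ i) => [w|] /=.
have F3 : forall s : Sidx a D, pattern J L c (val s) && (s != σ) ->
    (#|Z (val s)| < #|Z (val σ)|)%N.
  move=> s /andP[/forallP H ne]; apply: (Zlt (j := j)) => //.
    move=> i ni; move: (H i); rewrite /L /J /supp !inE ffunE (negbTE ni) /=.
    by case: (val σ i) => [w|] /= /eqP.
  apply/negP; rewrite inE; move: (H j); rewrite /L /J /supp !inE Ev0 eqxx /=.
  case Esj: (val s j) => [w|] // _ /eqP wd.
  move/negP: ne; apply; rewrite -val_eqE; apply/eqP/ffunP => i.
  case: (eqVneq i j) => [-> | ni]; first by rewrite Esj Ev0 wd v0d.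
  move: (H i); rewrite /L /J /supp !inE ffunE (negbTE ni) /=.
  by case: (val σ i) => [w'|] /= /eqP.
have F4 : (#|Z sb| < #|Z (val σ)|)%N.
  apply: (Zlt (j := j)) => //.
    by move=> i ni; rewrite ffunE (negbTE ni).
  by rewrite inE ffunE eqxx.
pose g := @genform K n a D J L c.
have Ig : I g by apply: Igen; exists J, L, c.
have Eg : E g = 0 by rewrite /E tau_genform // /theta raddf0.
have gE : g = Xvar K σ + \sum_(s : Sidx a D | pattern J L c (val s) && (s != σ)) Xvar K s
              - Xvar K ub.
  rewrite /g /genform (bigD1 σ) //=; congr (_ - _).
  by rewrite (eq_bigl (fun r => r == ub)) ?big_pred1_eq.
move: Eg; rewrite gE E_B E_D E_sum => Eg.
have -> : Xvar K σ - E (Xvar K σ) =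
   g - \sum_(s : Sidx a D | pattern J L c (val s) && (s != σ)) (Xvar K s - E (Xvar K s))
   + (Xvar K ub - E (Xvar K ub)).
  rewrite gE sumrB.
  set A := E (Xvar K σ) in Eg *.
  have -> : A = A - (A + \sum_(i | pattern J L c (val i) && (i != σ)) E (Xvar K i) - E (Xvar K ub)) by rewrite Eg subr0.
  set S1 := \sum_(i | _) E (Xvar K i).
  set S2 := \sum_(i | _) Xvar K i.
  ring.
apply: ID.
  apply: IB => //; apply: Isum => s Ps; apply: IH.
  by rewrite -ltnS (leq_trans (F3 s Ps) Hm).
by apply: IH; rewrite -ltnS (leq_trans F4 Hm).
Qed.

Lemma E_M p q : E (p * q) = E p * E q.
Proof. by rewrite /E tauM /theta rmorphM. Qed.
Lemma E_C c : E c%:MP = c%:MP.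
Proof. by rewrite /E /tau /theta !comp_mpolyC. Qed.

Lemma red_all p : I (p - E p).
Proof.
have Q0 : I (0 - E 0) by rewrite E0 subrr; apply: I0.
have QD : forall x y, I (x - E x) -> I (y - E y) -> I (x + y - E (x + y)).
  move=> x y Hx Hy; rewrite E_D.
  have -> : x + y - (E x + E y) = (x - E x) + (y - E y) by rewrite opprD addrACA.
  exact: ID.
have QM : forall x y, I (x - E x) -> I (y - E y) -> I (x * y - E (x * y)).
  move=> x y Hx Hy; rewrite E_M.
  have -> : x * y - E x * E y = y * (x - E x) + E x * (y - E y).
    by rewrite !mulrBr [y * x]mulrC [y * E x]mulrC addrA subrK.
  by apply: ID; apply: IM.
have QC : forall c, I (c%:MP - E c%:MP) by move=> c; rewrite E_C subrr; apply: I0.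
have Q1 : I (1 - E 1) by rewrite -mpolyC1; apply: QC.
have QX : forall i, I ('X_i - E 'X_i).
  move=> i; rewrite -(enum_valK i); exact: (red (enum_val i)).
rewrite (mpolyE p).
apply: (big_ind (fun q => I (q - E q)) Q0 QD) => m _.
rewrite -mul_mpolyC; apply: (QM); first exact: QC.
rewrite mpolyXE_id; apply: (big_ind (fun q => I (q - E q)) Q1 QM) => i _.
elim: (m i) => [|k IHk]; first by rewrite expr0; exact: Q1.
rewrite exprS; apply: (QM); [exact: QX | exact: IHk].
Qed.
End Main.

Unset Implicit Arguments.
Theorem proposition3p2 (K : fieldType) (n : nat) (a : 'I_n -> nat)
  (Hpos : forall j, (0 < a j)%N)
  (D : {set {set 'I_n}}) (HD : simplicial_complex D) :
  forall p : Sring K a D,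
    K_Delta p <-> in_ideal_gen (@is_generator K n a D) p.
Proof.
move=> p; split; last exact: easy_dir.
move=> Hp; have := red_all Hpos HD p.
by rewrite /E Hp /theta raddf0 subr0.
Qed.
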